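(* Let $\mathcal C$ be a pointed category with finite coproducts, $X,Y\in\mathcal C$, $A$ an abelian group, and $\varphi\colon\mathcal C(X,Y)\to A$ a function with $\varphi(0)=0$. Let $\bar\varphi\colon U_X(Y)\to A$ be its $\mathbb Z$-linear extension. Then $\varphi$ is quadratic if and only if $\bar\varphi$ factors through $t_2\colon U_X(Y)\to T_2U_X(Y)$.
   Context: Notation. $\vee$ is the coproduct, $r_1,r_2\colon Y\vee Y\to Y$ are the retractions, and $\nabla$ is the folding map. Functors. - $U_X\colon\mathcal C\to Ab$, $U_X(Z)=\mathbb Z[\mathcal C(X,Z)]/\mathbb Z\cdot0$, functorial by postcomposition. - For a reduced functor $F$: $cr_2F(Y,Y)=\ker(F(Y\vee Y)\to F(Y)\oplus F(Y))$, and $cr_3F(Y,Y,Y)=cr_2(cr_2F(-,Y))(Y,Y)$. - $T_2F(Y)=\mathrm{coker}(cr_3F(Y,Y,Y)\subseteq F(Y^{\vee3})\xrightarrow{F(\nabla^3)}F(Y))$, with projection $t_2$. - For a bireduced bifunctor $B$, $T_{11}B$ is the quotient of $B(Y,Y)$ by the images of $cr_2(B(-,Y))(Y,Y)$ under $B(\nabla,1)$ and of $cr_2(B(Y,-))(Y,Y)$ under $B(1,\nabla)$; $t_{11}$ is the projection. Quadratic maps. - The cross-effect $cr_2(\varphi)\colon cr_2U_X(Y,Y)\to A$ is the restriction to $cr_2U_X(Y,Y)\subseteq U_X(Y\vee Y)$ of the homomorphism determined by $\xi\mapsto\varphi(\nabla\xi)-\varphi(r_1\xi)-\varphi(r_2\xi)$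 for $\xi\in\mathcal C(X,Y\vee Y)$. - $\varphi$ is called quadratic if $cr_2(\varphi)$ factors through $t_{11}\colon cr_2U_X(Y,Y)\to T_{11}(cr_2U_X)(Y,Y)$. *)

(* Defs.v *)
From HB Require Import structures.
From mathcomp Require Import all_boot all_order all_algebra.
From mathcomp Require Import freeg.

Set Implicit Arguments.
Unset Strict Implicit.
Unset Printing Implicit Defensive.

Import Order.TTheory GRing.Theory Num.Theory.
Local Open Scope ring_scope.

(* The empty coproduct is the initial object, which in a pointed       *)
(* category is the zero object.  Hom-sets carry a choiceType structure *)
(* (harmless classically), needed to form free abelian groups on them. *)
Record PCCat := {
  obj :> Type;
  mor : obj -> obj -> choiceType;
  comp : forall X Y Z : obj, mor Y Z -> mor X Y -> mor X Z;
  idm : forall X : obj, mor X X;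
  compA : forall (X Y Z W : obj) (h : mor Z W) (g : mor Y Z) (f : mor X Y),
      comp h (comp g f) = comp (comp h g) f;
  comp1f : forall (X Y : obj) (f : mor X Y), comp (idm Y) f = f;
  compf1 : forall (X Y : obj) (f : mor X Y), comp f (idm X) = f;
  zobj : obj;
  from_z : forall X : obj, mor zobj X;
  to_z : forall X : obj, mor X zobj;
  from_z_uniq : forall (X : obj) (f : mor zobj X), f = from_z X;
  to_z_uniq : forall (X : obj) (f : mor X zobj), f = to_z X;
  coprod : obj -> obj -> obj;
  inl : forall X Y : obj, mor X (coprod X Y);
  inr : forall X Y : obj, mor Y (coprod X Y);
  copair : forall X Y Z : obj, mor X Z -> mor Y Z -> mor (coprod X Y) Z;
  copair_inl : forall (X Y Z : obj) (f : mor X Z) (g : mor Y Z),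
      comp (copair f g) (inl X Y) = f;
  copair_inr : forall (X Y Z : obj) (f : mor X Z) (g : mor Y Z),
      comp (copair f g) (inr X Y) = g;
  copair_uniq : forall (X Y Z : obj) (f : mor X Z) (g : mor Y Z)
      (h : mor (coprod X Y) Z),
      comp h (inl X Y) = f -> comp h (inr X Y) = g -> h = copair f g
}.

Arguments mor {_}.
Arguments comp {_ X Y Z}.
Arguments idm {_}.
Arguments coprod {_}.
Arguments inl {_}.
Arguments inr {_}.
Arguments copair {_ X Y Z}.

Section Cat.
Variable C : PCCat.

Definition zmor (X Z : C) : mor X Z := comp (from_z Z) (to_z X).

Definition cmap (X X' Y Y' : C) (f : mor X X') (g : mor Y Y')
  : mor (coprod X Y) (coprod X' Y') :=
  copair (comp (inl X' Y') f) (comp (inr X' Y') g).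

Definition r1 (X Y : C) : mor (coprod X Y) X := copair (idm X) (zmor Y X).
Definition r2 (X Y : C) : mor (coprod X Y) Y := copair (zmor X Y) (idm Y).

Definition fold2 (Y : C) : mor (coprod Y Y) Y := copair (idm Y) (idm Y).
Definition fold3 (Y : C) : mor (coprod (coprod Y Y) Y) Y :=
  copair (fold2 Y) (idm Y).

(* The functor U_X.  U_X(Z) = Z[C(X,Z)] / Z.0 ; we represent it by     *)
(* the free abelian group {freeg mor X Z} together with equality       *)
(* modulo the subgroup Z.<<0>>.                                        *)
Variable X : C.

Definition FU (Z : C) := {freeg (mor X Z) / int}.

Definition eqU (Z : C) (u v : FU Z) : Prop :=
  exists k : int, u - v = << k *g zmor X Z >>.

Definition Umap (Z W : C) (f : mor Z W) (u : FU Z) : FU W :=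
  fglift (fun h : mor X Z => << comp f h >> : FU W) u.

(* cr_2 U_X(Z1,Z2) = ker(U(Z1 \/ Z2) -> U(Z1) (+) U(Z2)) *)
Definition cr2U (Z1 Z2 : C) (u : FU (coprod Z1 Z2)) : Prop :=
  eqU (Umap (r1 Z1 Z2) u) 0 /\ eqU (Umap (r2 Z1 Z2) u) 0.

(* cr_3 U_X(Y,Y,Y) = cr_2 (cr_2 U_X(-,Y)) (Y,Y), inside U_X((Y\/Y)\/Y):
   u lies in cr_2U_X(Y\/Y, Y), and both images under
   cr_2U_X(r_i, 1) = U_X(r_i \/ 1) vanish. *)
Definition cr3U (Y : C) (u : FU (coprod (coprod Y Y) Y)) : Prop :=
  cr2U u /\
  eqU (Umap (cmap (r1 Y Y) (idm Y)) u) 0 /\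
  eqU (Umap (cmap (r2 Y Y) (idm Y)) u) 0.

(* cr_2 (B(Y,-))(Y,Y) for B = cr_2 U_X, inside U_X(Y \/ (Y\/Y)) *)
Definition cr3U' (Y : C) (u : FU (coprod Y (coprod Y Y))) : Prop :=
  cr2U u /\
  eqU (Umap (cmap (idm Y) (r1 Y Y)) u) 0 /\
  eqU (Umap (cmap (idm Y) (r2 Y Y)) u) 0.

(* ker t_2 in U_X(Y): image of cr_3U_X(Y,Y,Y) under U_X(nabla^3) *)
Definition ker_t2 (Y : C) (v : FU Y) : Prop :=
  exists u, cr3U u /\ eqU v (Umap (fold3 Y) u).

(* ker t_11 in cr_2U_X(Y,Y): the subgroup generated by the images of
   cr_2(B(-,Y))(Y,Y) under B(nabla,1) and of cr_2(B(Y,-))(Y,Y) under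
   B(1,nabla) (a sum of two subgroups). *)
Definition ker_t11 (Y : C) (v : FU (coprod Y Y)) : Prop :=
  exists u u', cr3U u /\ cr3U' u' /\
    eqU v (Umap (cmap (fold2 Y) (idm Y)) u + Umap (cmap (idm Y) (fold2 Y)) u').

(* A map f defined on (a subgroup of) U, well defined on U, factors
   through the projection onto the quotient by the subgroup K iff it is
   constant on K-cosets. *)
Definition factors_through (Z : C) (P : FU Z -> Prop) (K : FU Z -> Prop)
  (A : Type) (f : FU Z -> A) : Prop :=
  forall u v, P u -> P v -> K (u - v) -> f u = f v.

Variables (Y : C) (A : zmodType) (phi : mor X Y -> A).

Definition phibar (u : FU Y) : A :=
  \sum_(h <- dom u) phi h *~ coeff h u.

Definition cr2phi_pre (xi : mor X (coprod Y Y)) : A :=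
  phi (comp (fold2 Y) xi) - phi (comp (r1 Y Y) xi) - phi (comp (r2 Y Y) xi).

Definition cr2phi (u : FU (coprod Y Y)) : A :=
  \sum_(h <- dom u) cr2phi_pre h *~ coeff h u.

Definition quadratic : Prop :=
  factors_through (@cr2U Y Y) (@ker_t11 Y) cr2phi.

End Cat.

(* Main.v *)
Require Import Defs.
From HB Require Import structures.
From mathcomp Require Import all_boot all_order all_algebra.
From mathcomp Require Import freeg.
Set Implicit Arguments.
Unset Strict Implicit.
Unset Printing Implicit Defensive.
Import Order.TTheory GRing.Theory Num.Theory.
Local Open Scope ring_scope.

Section Lin.
Variables (K : choiceType) (A : zmodType) (psi : K -> A).
Definition lin (u : {freeg K / int}) : A := \sum_(h <- dom u) psi h *~ coeff h u.

Lemma linE (s : seq K) u : uniq s -> {subset dom u <= s} ->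
  lin u = \sum_(h <- s) psi h *~ coeff h u.
Proof.
move=> us sub.
rewrite (bigID (fun h => h \in dom u)) /= [X in _ + X]big1 ?addr0; last first.
  by move=> h /negbTE hn; rewrite coeff_outdom ?hn // mulrz0.
rewrite -big_filter /lin; apply: perm_big.
apply: uniq_perm; rewrite ?filter_uniq ?uniq_dom //.
by move=> h; rewrite mem_filter; case: (boolP (h \in dom u)) => // /sub ->.
Qed.

Lemma linD u v : lin (u + v) = lin u + lin v.
Proof.
set s := undup (dom u ++ dom v ++ dom (u + v)).
have us : uniq s by apply: undup_uniq.
rewrite (@linE s u) ?(@linE s v) ?(@linE s (u+v)) //.
- by rewrite -big_split /=; apply: eq_bigr => h _; rewrite coeffD mulrzDr.
- by move=> h hd; rewrite mem_undup !mem_cat hd ?orbT.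
- by move=> h hd; rewrite mem_undup !mem_cat hd ?orbT.
- by move=> h hd; rewrite mem_undup !mem_cat hd ?orbT.
Qed.

Lemma lin0 : lin 0 = 0.
Proof. by rewrite /lin dom0 big_nil. Qed.

Lemma linN u : lin (- u) = - lin u.
Proof. by apply/eqP; rewrite -subr_eq0 opprK -linD addNr lin0. Qed.

Lemma linB u v : lin (u - v) = lin u - lin v.
Proof. by rewrite linD linN. Qed.

Lemma linZ (c : int) u : lin (c *: u) = lin u *~ c.
Proof.
rewrite (@linE (dom u)) ?uniq_dom //; last exact: domZ_subset.
rewrite /lin (big_morph (fun x => x *~ c) (@mulrzDl_tmp _ c) (mul0rz _ c)).
apply: eq_bigr => h _.
by rewrite coeffZ mulrzA_C mulrC.
Qed.

Lemma freegUZ (c : int) (x : K) : << c *g x >> = c *: << x >>.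
Proof.
apply/eqP/freeg_eqP => y; by rewrite coeffZ !coeffU mul1r.
Qed.

Lemma linU1 x : lin << x >> = psi x.
Proof. by rewrite /lin domU1 big_seq1 coeffU eqxx mulr1. Qed.

Lemma linU c x : lin << c *g x >> = psi x *~ c.
Proof. by rewrite freegUZ linZ linU1. Qed.

Lemma freeg_ind (P : {freeg K / int} -> Prop) :
  P 0 -> (forall u v, P u -> P v -> P (u + v)) ->
  (forall c x, P << c *g x >>) -> forall u, P u.
Proof.
move=> P0 PD PU u; rewrite -(freeg_sumE u).
by elim: (dom u) => [|h s IH]; rewrite ?big_nil ?big_cons //; apply: PD.
Qed.
End Lin.

Lemma lin_ext (K : choiceType) (A : zmodType) (p q : K -> A) u :
  p =1 q -> lin p u = lin q u.
Proof. by move=> e; apply: eq_bigr => h _; rewrite e. Qed.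

Lemma lin_sub3 (K : choiceType) (A : zmodType) (p q r : K -> A) u :
  lin (fun h => p h - q h - r h) u = lin p u - lin q u - lin r u.
Proof.
rewrite /lin -!sumrB; apply: eq_bigr => h _; by rewrite !mulrzBl.
Qed.
Section CatL.
Variable C : PCCat.
Implicit Types X Y Z W : C.

Lemma comp_copair X Y Z W (h : mor Z W) (f : mor X Z) (g : mor Y Z) :
  Defs.comp h (copair f g) = copair (Defs.comp h f) (Defs.comp h g).
Proof.
apply: copair_uniq; by rewrite -Defs.compA ?copair_inl ?copair_inr.
Qed.

Lemma copair_eta X Y : copair (inl X Y) (inr X Y) = idm (coprod X Y).
Proof. by symmetry; apply: copair_uniq; rewrite comp1f. Qed.

Lemma comp_zmor X Z W (f : mor Z W) : Defs.comp f (zmor X Z) = zmor X W.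
Proof. by rewrite /zmor Defs.compA [Defs.comp f _]from_z_uniq. Qed.

Lemma zmor_comp X Z W (f : mor X Z) : Defs.comp (zmor Z W) f = zmor X W.
Proof. by rewrite /zmor -Defs.compA [Defs.comp _ f]to_z_uniq. Qed.

Variable X : C.

Lemma UmapB Z W (f : mor Z W) (u v : FU X Z) :
  Umap f (u - v) = Umap f u - Umap f v.
Proof. exact: lift_is_additive. Qed.

Lemma Umap0 Z W (f : mor Z W) : Umap f (0 : FU X Z) = 0.
Proof. by rewrite -(subrr (0 : FU X Z)) UmapB subrr. Qed.

Lemma UmapD Z W (f : mor Z W) (u v : FU X Z) :
  Umap f (u + v) = Umap f u + Umap f v.
Proof.
have UN : Umap f (- v) = - Umap f v by rewrite -sub0r UmapB Umap0 sub0r.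
by rewrite -{1}[v]opprK UmapB UN opprK.
Qed.

Lemma UmapU Z W (f : mor Z W) c (h : mor X Z) :
  Umap f << c *g h >> = << c *g Defs.comp f h >>.
Proof. rewrite /Umap liftU; symmetry; exact: freegUZ. Qed.

Lemma Umap_comp Z W V (f : mor Z W) (g : mor W V) (u : FU X Z) :
  Umap g (Umap f u) = Umap (Defs.comp g f) u.
Proof.
elim/freeg_ind: u => [|u v IHu IHv|c h]; first by rewrite !Umap0.
  by rewrite !UmapD IHu IHv.
by rewrite !UmapU Defs.compA.
Qed.

Lemma Umap_ext Z W (f g : mor Z W) (u : FU X Z) : f = g -> Umap f u = Umap g u.
Proof. by move->. Qed.

Lemma eqU_Umap Z W (f : mor Z W) (u : FU X Z) :
  eqU u 0 -> eqU (Umap f u) 0.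
Proof.
case=> k; rewrite subr0 => ->; exists k; by rewrite subr0 UmapU comp_zmor.
Qed.

Lemma eqU_lin Z (A : zmodType) (psi : mor X Z -> A) (u v : FU X Z) :
  psi (zmor X Z) = 0 -> eqU u v -> lin psi u = lin psi v.
Proof.
move=> p0 [k e]; apply/eqP; rewrite -subr_eq0 -linB e linU p0 mul0rz //.
Qed.

Lemma lin_Umap Z W (A : zmodType) (psi : mor X W -> A) (f : mor Z W) (u : FU X Z) :
  lin psi (Umap f u) = lin (fun h => psi (Defs.comp f h)) u.
Proof.
elim/freeg_ind: u => [|u v IHu IHv|c h]; first by rewrite Umap0 !lin0.
  by rewrite UmapD !linD IHu IHv.
by rewrite UmapU !linU.
Qed.

Lemma eqU0 Z : eqU (0 : FU X Z) 0.
Proof. by exists 0; rewrite subr0 freegU0. Qed.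

Lemma cr2U0 Z1 Z2 : cr2U (0 : FU X (coprod Z1 Z2)).
Proof. by split; rewrite Umap0; apply: eqU0. Qed.

Lemma cr3U'0 Y : cr3U' (0 : FU X (coprod Y (coprod Y Y))).
Proof. by split; [apply: cr2U0|split]; rewrite Umap0; apply: eqU0. Qed.

Lemma eqU_sub Z (u v : FU X Z) : eqU u v -> eqU (u - v) 0.
Proof. by case=> k e; exists k; rewrite subr0. Qed.

Lemma eqU_Umap2 Z W (f : mor Z W) (u v : FU X Z) :
  eqU u v -> eqU (Umap f u) (Umap f v).
Proof.
move/eqU_sub/(eqU_Umap f); rewrite UmapB; case=> k e; exists k; by rewrite -e subr0.
Qed.
End CatL.
Definition alpha (C : PCCat) (Y : C) : mor (coprod Y (coprod Y Y)) (coprod (coprod Y Y) Y) :=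
  copair (Defs.comp (inl (coprod Y Y) Y) (inl Y Y))
         (copair (Defs.comp (inl (coprod Y Y) Y) (inr Y Y)) (inr (coprod Y Y) Y)).

Lemma comp_from_z (C : PCCat) (Z W : C) (f : mor Z W) : Defs.comp f (from_z Z) = from_z W.
Proof. exact: from_z_uniq. Qed.
Lemma comp_to_z (C : PCCat) (Z W : C) (f : mor Z W) : Defs.comp (to_z W) f = to_z Z.
Proof. exact: to_z_uniq. Qed.

Lemma comp_to_z2 (C : PCCat) (V Z W : C) (g : mor V Z) (f : mor (zobj C) W) :
  Defs.comp (Defs.comp f (to_z Z)) g = Defs.comp f (to_z V).
Proof. by rewrite -Defs.compA comp_to_z. Qed.
Lemma copair_zz (C : PCCat) (X Y Z : C) :
  copair (Defs.comp (from_z Z) (to_z X)) (Defs.comp (from_z Z) (to_z Y)) =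
  Defs.comp (from_z Z) (to_z (coprod X Y)).
Proof. by symmetry; apply: copair_uniq; rewrite comp_to_z2. Qed.

Ltac cnorm := rewrite /cmap /fold3 /fold2 /alpha /r1 /r2 /zmor;
  do 8 rewrite ?comp_copair ?Defs.compA ?copair_inl ?copair_inr ?comp1f ?compf1 ?comp_from_z ?comp_to_z ?comp_to_z2 ?copair_zz ?copair_eta.

Section Eqs.
Variables (C : PCCat) (Y : C).
Lemma E1 : Defs.comp (fold2 Y) (cmap (fold2 Y) (idm Y)) = fold3 Y.
Proof. by cnorm. Qed.
Lemma E2 : Defs.comp (r1 Y Y) (cmap (fold2 Y) (idm Y)) = Defs.comp (fold2 Y) (r1 (coprod Y Y) Y).
Proof. by cnorm. Qed.
Lemma E3 : Defs.comp (r2 Y Y) (cmap (fold2 Y) (idm Y)) = r2 (coprod Y Y) Y.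
Proof. by cnorm. Qed.
Lemma E4 : Defs.comp (fold2 Y) (cmap (idm Y) (fold2 Y)) = Defs.comp (fold3 Y) (alpha Y).
Proof. by cnorm. Qed.
Lemma E5 : Defs.comp (r1 (coprod Y Y) Y) (alpha Y) = cmap (idm Y) (r1 Y Y).
Proof. by cnorm. Qed.
Lemma E6 : Defs.comp (r2 (coprod Y Y) Y) (alpha Y) = Defs.comp (r2 Y Y) (r2 Y (coprod Y Y)).
Proof. by cnorm. Qed.
Lemma E7 : Defs.comp (cmap (r1 Y Y) (idm Y)) (alpha Y) = cmap (idm Y) (r2 Y Y).
Proof. by cnorm. Qed.
Lemma E8 : Defs.comp (cmap (r2 Y Y) (idm Y)) (alpha Y) = r2 Y (coprod Y Y).
Proof. by cnorm. Qed.
End Eqs.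
Lemma eqU_refl (C : PCCat) (X Z : C) (u : FU X Z) : eqU u u.
Proof. by exists 0; rewrite subrr freegU0. Qed.

Lemma cr2phiE (C : PCCat) (X Y : C) (A : zmodType) (phi : mor X Y -> A)
  (phi0 : phi (zmor X Y) = 0) (w : FU X (coprod Y Y)) :
  cr2U w -> cr2phi phi w = lin phi (Umap (fold2 Y) w).
Proof.
move=> [h1 h2].
change (lin (fun h => phi (Defs.comp (fold2 Y) h) - phi (Defs.comp (r1 Y Y) h)
   - phi (Defs.comp (r2 Y Y) h)) w = lin phi (Umap (fold2 Y) w)).
rewrite lin_sub3 -!lin_Umap (eqU_lin phi0 h1) (eqU_lin phi0 h2) lin0.
by rewrite !subr0.
Qed.

Theorem proposition2p10 (C : PCCat) (X Y : C) (A : zmodType)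
  (phi : mor X Y -> A) (phi0 : phi (zmor X Y) = 0%R) :
  quadratic phi <->
  factors_through (fun _ : FU X Y => True) (@ker_t2 C X Y) (phibar phi).
Proof.
split.
- move=> Q u v _ _ [a [Ha E]].
  change (lin phi u = lin phi v).
  apply/eqP; rewrite -subr_eq0 -linB (eqU_lin phi0 E).
  case: Ha => [[Hr1 Hr2] [H1 H2]].
  set w := Umap (cmap (fold2 Y) (idm Y)) a.
  have cw : cr2U w.
    split.
      rewrite /w Umap_comp E2 -Umap_comp; exact: eqU_Umap.
    by rewrite /w Umap_comp E3.
  have kw : ker_t11 (w - 0).
    exists a, 0; split; first by split.
    split; first exact: cr3U'0.
    by rewrite Umap0 addr0 subr0; apply: eqU_refl.
  have := Q w 0 cw (cr2U0 _ _ _) kw.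
  rewrite (cr2phiE phi0 cw) (cr2phiE phi0 (cr2U0 _ _ _)) Umap0 lin0.
  by rewrite /w Umap_comp E1 => ->.
- move=> R u v cu cv [a [b [Ha [Hb E]]]].
  rewrite (cr2phiE phi0 cu) (cr2phiE phi0 cv).
  apply/eqP; rewrite -subr_eq0 -linB -UmapB.
  rewrite (eqU_lin phi0 (eqU_Umap2 (fold2 Y) E)) UmapD !Umap_comp E1 E4.
  rewrite -Umap_comp linD.
  have Z0 : forall c, cr3U c -> lin phi (Umap (fold3 Y) c) = 0.
    move=> c Hc.
    have := R (Umap (fold3 Y) c) 0 I I.
    rewrite /phibar /lin => ->.
      by rewrite dom0 big_nil.
    by exists c; split => //; rewrite subr0; apply: eqU_refl.
  rewrite Z0 // Z0 ?addr0 //.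
  case: Hb => [[Hr1 Hr2] [H1 H2]].
  split; first split.
  + by rewrite Umap_comp E5.
  + by rewrite Umap_comp E6 -Umap_comp; apply: eqU_Umap.
  + split.
      by rewrite Umap_comp E7.
    by rewrite Umap_comp E8.
Qed.
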